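(* Let $N=\{1,\dots,n\}$, $\eta>0$, integers $B\ge1$, $Q\ge1$. Let $(A(k))_{k\ge0}$ be $n\times n$ matrices, let $x(0)\in\mathbb{R}^n$ have all components multiples of $1/Q$, and define componentwise $x_i(k+1)=\lfloor\sum_{j=1}^na_{ij}(k)x_j(k)\rfloor$, where $\lfloor\cdot\rfloor$ is rounding down to the nearest multiple of $1/Q$. Assume: (i) each $A(k)$ is doubly stochastic with positive diagonal entries and all positive entries at least $\eta$; (ii) for every integer $k\ge0$, every permutation $\sigma$ of $N$ with $x_{\sigma(1)}(kB)\ge\cdots\ge x_{\sigma(n)}(kB)$, and every $d\in\{1,\dots,n-1\}$, either $x_{\sigma(d)}(kB)=x_{\sigma(d+1)}(kB)$, or there exist $t\in\{kB,\dots,(k+1)B-1\}$, $i\in\{\sigma(1),\dots,\sigma(d)\}$, $j\in\{\sigma(d+1),\dots,\sigma(n)\}$ with $(i,j)$ or $(j,i)$ in $\mathcal{E}(A(t))$. Then for every integer $k\ge0$ and every permutation $\sigma$ of $N$ with $x_{\sigma(1)}(kB)\ge\cdots\ge x_{\sigma(n)}(kB)$, \[\underline{V}(x(kB))-\underline{V}(x((k+1)B))\ge\frac\eta2\sum_{i=1}^{n-1}\big(x_{\sigma(i)}(kB)-x_{\sigma(i+1)}(kB)\big)^2.\]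
   Context: A matrix is doubly stochastic if it is nonnegative with all row and column sums equal to $1$. For a matrix $A=[a_{ij}]$, $\mathcal{E}(A)$ is the set of directed edges $(j,i)$ (including self-edges) with $a_{ij}>0$. For $x\in\mathbb{R}^n$, $m(x)=\min_ix_i$ and $\underline{V}(x)=\sum_{i=1}^n(x_i-m(x))^2$. *)

(* Defs.v *)
From HB Require Import structures.
From mathcomp Require Import all_boot all_order all_fingroup all_algebra.
From mathcomp Require Import reals.
Set Implicit Arguments. Unset Strict Implicit. Unset Printing Implicit Defensive.
Import Order.TTheory GRing.Theory Num.Theory.
Local Open Scope ring_scope.

(* Index set N = {1..n} is represented by 'I_n = {0..n-1}. *)

Definition qfloor (R : realType) (Q : nat) (y : R) : R :=
  (Num.floor (y * Q%:R))%:~R / Q%:R.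

Definition doubly_stochastic (R : realType) (n : nat) (A : 'M[R]_n) : Prop :=
  (forall i j, 0 <= A i j) /\
  (forall i, \sum_j A i j = 1) /\
  (forall j, \sum_i A i j = 1).

Definition in_edges (R : realType) (n : nat) (A : 'M[R]_n) (e : 'I_n * 'I_n) : Prop :=
  0 < A e.2 e.1.

(* m(x) = min_i x_i (the default value is irrelevant when n > 0) *)
Definition mmin (R : realType) (n : nat) (x : 'I_n -> R) : R :=
  \big[Num.min/head 0 [seq x i | i <- enum 'I_n]]_(i < n) x i.

Definition Vlow (R : realType) (n : nat) (x : 'I_n -> R) : R :=
  \sum_(i < n) (x i - mmin x) ^+ 2.

Definition sorted_by (R : realType) (n : nat) (x : 'I_n -> R) (s : 'S_n) : Prop :=
  forall p q : 'I_n, (p <= q)%N -> x (s q) <= x (s p).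

(* Main.v *)
Require Import Defs.
From HB Require Import structures.
From mathcomp Require Import all_boot all_order all_fingroup all_algebra.
From mathcomp Require Import reals.
From mathcomp Require Import ring lra.
Import Order.TTheory GRing.Theory Num.Theory.
Set Implicit Arguments. Unset Strict Implicit. Unset Printing Implicit Defensive.
Local Open Scope ring_scope.

Lemma qfloor_le (R : realType) (Q : nat) (y : R) : (0 < Q)%N -> qfloor Q y <= y.
Proof.
move=> hQ; rewrite /qfloor ler_pdivrMr ?ltr0n //.
exact: floor_le.
Qed.

Lemma qfloor_ge (R : realType) (Q : nat) (z : int) (y : R) : (0 < Q)%N ->
  z%:~R / Q%:R <= y -> z%:~R / Q%:R <= qfloor Q y.
Proof.
move=> hQ; rewrite /qfloor ler_pdivrMr ?ltr0n // => h.
rewrite ler_pM2r ?invr_gt0 ?ltr0n // ler_int floor_ge_int //.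
Qed.

Lemma bigmin_le (R : realType) (I : eqType) (s : seq I) (F : I -> R) idx i :
  i \in s -> \big[Num.min/idx]_(j <- s) F j <= F i.
Proof.
elim: s => // a s IH; rewrite inE big_cons => /orP [/eqP ->|/IH h].
  by rewrite ge_min lexx.
by rewrite ge_min h orbT.
Qed.

Lemma bigmin_att (R : realType) (I : eqType) (s : seq I) (F : I -> R) idx :
  \big[Num.min/idx]_(j <- s) F j = idx \/ exists2 j, j \in s & \big[Num.min/idx]_(j <- s) F j = F j.
Proof.
elim: s => [|a s IH]; first by left; rewrite big_nil.
rewrite big_cons; case: (leP (F a) (\big[Num.min/idx]_(j <- s) F j)) => h.
  by right; exists a; rewrite ?mem_head.
case: IH => [e|[j js e]]; first by left.
by right; exists j; rewrite ?inE ?js ?orbT.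
Qed.

Lemma mmin_le (R : realType) n (x : 'I_n -> R) i : mmin x <= x i.
Proof. by rewrite /mmin; apply: bigmin_le; rewrite mem_index_enum. Qed.

Lemma mmin_att (R : realType) n (x : 'I_n -> R) (i0 : 'I_n) : exists i, mmin x = x i.
Proof.
rewrite /mmin; case: (@bigmin_att _ _ (index_enum 'I_n) x (head 0 [seq x i | i <- enum 'I_n])) => [->|[j _ ->]]; last by exists j.
case E: (enum 'I_n) => [|j s] /=; last by exists j.
by have := mem_enum 'I_n i0; rewrite E.
Qed.

Lemma row_identity (R : realType) n (A : 'M[R]_n) (x : 'I_n -> R) c i :
  \sum_j A i j = 1 ->
  \sum_j A i j * (x j - \sum_l A i l * x l) ^+ 2 =
  \sum_j A i j * (x j - c) ^+ 2 - (\sum_l A i l * x l - c) ^+ 2.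
Proof.
move=> hr; set y := \sum_l A i l * x l.
have e : forall j, A i j * (x j - y) ^+ 2 = A i j * (x j - c) ^+ 2 +
   ((-2 * (y - c)) * (A i j * x j) + ((y - c) ^+ 2 + 2 * (y - c) * c) * A i j).
  by move=> j; ring.
rewrite (eq_bigr _ (fun j _ => e j)) big_split /= big_split /=.
rewrite -!mulr_sumr hr -/y; ring.
Qed.

Lemma step_dec (R : realType) n (Q : nat) (A : 'M[R]_n) (x z : 'I_n -> R) :
  (0 < Q)%N -> doubly_stochastic A ->
  (forall i, exists w : int, x i = w%:~R / Q%:R) ->
  (forall i, z i = qfloor Q (\sum_j A i j * x j)) ->
  \sum_i \sum_j A i j * (x j - \sum_l A i l * x l) ^+ 2 <= Vlow x - Vlow z.
Proof.
case: n A x z => [|n] A x z hQ [hA [hr hc]] hx hz.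
  by rewrite /Vlow !big_ord0 subrr.
set c := mmin x.
have [ic ec] := mmin_att x ord0.
have [w ew] := hx ic.
have hy : forall i, c <= \sum_j A i j * x j.
  move=> i; apply: (@le_trans _ _ (\sum_j A i j * c)).
    by rewrite -mulr_suml hr mul1r.
  by apply: ler_sum => j _; apply: ler_wpM2l => //; apply: mmin_le.
have hzc : forall i, c <= z i.
  by move=> i; rewrite hz /c ec ew; apply: qfloor_ge => //; rewrite -ew -ec; exact: hy.
have hzy : forall i, z i <= \sum_j A i j * x j.
  by move=> i; rewrite hz; apply: qfloor_le.
have mz : c <= mmin z by have [j ->] := mmin_att z ord0.
have h1 : Vlow z <= \sum_i (\sum_j A i j * x j - c) ^+ 2.
  rewrite /Vlow; apply: ler_sum => i _.
  have := hzc i; have := hzy i; have := mmin_le z i; nra.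
have h2 : \sum_i (\sum_j A i j * x j - c) ^+ 2 =
    Vlow x - \sum_i \sum_j A i j * (x j - \sum_l A i l * x l) ^+ 2.
  rewrite (eq_bigr _ (fun i _ => @row_identity R n.+1 A x c i (hr i))) sumrB.
  rewrite exchange_big /=.
  have -> : \sum_j \sum_i A i j * (x j - c) ^+ 2 = Vlow x.
    by rewrite /Vlow; apply: eq_bigr => j _; rewrite -mulr_suml hc mul1r.
  ring.
lra.
Qed.

Lemma row_bound (R : realType) n (eta : R) (A : 'M[R]_n) (x : 'I_n -> R) i a b u :
  0 < eta -> (forall j, 0 <= A i j) -> 0 < A i a -> 0 < A i b ->
  (forall j, 0 < A i j -> eta <= A i j) ->
  eta / 2 * (x a - x b) ^+ 2 <= \sum_j A i j * (x j - u) ^+ 2.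
Proof.
move=> he hA ha hb hE.
case: (eqVneq a b) => [->|nab].
  rewrite subrr expr0n /= mulr0; apply: sumr_ge0 => j _.
  by apply: mulr_ge0 => //; apply: sqr_ge0.
rewrite (bigD1 a) //= (bigD1 b) /=; last by rewrite eq_sym nab.
have r0 : 0 <= \sum_(i0 | (i0 != a) && (i0 != b)) A i i0 * (x i0 - u) ^+ 2.
  by apply: sumr_ge0 => j _; apply: mulr_ge0 => //; apply: sqr_ge0.
have ea := hE _ ha; have eb := hE _ hb.
have s1 : eta * (x a - u) ^+ 2 <= A i a * (x a - u) ^+ 2.
  by apply: ler_wpM2r => //; apply: sqr_ge0.
have s2 : eta * (x b - u) ^+ 2 <= A i b * (x b - u) ^+ 2.
  by apply: ler_wpM2r => //; apply: sqr_ge0.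
have s3 : 0 <= eta * (x a + x b - 2 * u) ^+ 2 by apply: mulr_ge0; [apply: ltW|apply: sqr_ge0].
have e : eta / 2 * (x a - x b) ^+ 2 =
  eta * (x a - u) ^+ 2 + eta * (x b - u) ^+ 2 - eta * (x a + x b - 2 * u) ^+ 2 / 2.
  by field.
rewrite e; lra.
Qed.

Lemma exists_max (R : realType) (I : finType) (P : pred I) (F : I -> R) i0 :
  P i0 -> exists2 a, P a & forall j, P j -> F j <= F a.
Proof. by move=> h; case: (arg_maxP F h) => a Pa ha; exists a. Qed.

Lemma exists_min (R : realType) (I : finType) (P : pred I) (F : I -> R) i0 :
  P i0 -> exists2 a, P a & forall j, P j -> F a <= F j.
Proof. by move=> h; case: (arg_minP F h) => a Pa ha; exists a. Qed.

Definition Mb (R : realType) (w : nat -> R) lo hi N :=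
  if w N <= lo then hi - lo else if w N <= hi then hi - w N else 0.

Lemma nat_gap (R : realType) (w : nat -> R) lo hi N :
  lo <= hi -> (forall d, (d < N)%N -> w d.+1 <= w d) ->
  \sum_(d < N) (if (lo <= w d.+1) && (w d <= hi) then w d - w d.+1 else 0) <= Mb w lo hi N.
Proof.
move=> hlh; elim: N => [|N IH] hw.
  rewrite big_ord0 /Mb; case: (leP (w 0%N) lo) => _; first lra.
  by case: (leP (w 0%N) hi) => h; lra.
rewrite big_ord_recr /=.
have := IH (fun d hd => hw d (ltnW hd)); have := hw N (ltnSn N).
rewrite /Mb.
case: (leP (w N) lo); case: (leP (w N) hi); case: (leP (w N.+1) lo);
  case: (leP (w N.+1) hi); case: (leP lo (w N.+1)) => /=; lra.
Qed.

Lemma gap_sum (R : realType) n (v : 'I_n -> R) lo hi :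
  (forall p q : 'I_n, (p <= q)%N -> v q <= v p) -> lo <= hi ->
  \sum_(p < n) \sum_(q < n | val q == (val p).+1)
     (if (lo <= v q) && (v p <= hi) then (v p - v q) ^+ 2 else 0) <= (hi - lo) ^+ 2.
Proof.
move=> hv hlh.
have lin : \sum_(p < n) \sum_(q < n | val q == (val p).+1)
     (if (lo <= v q) && (v p <= hi) then v p - v q else 0) <= hi - lo.
  case: n v hv => [|n] v hv; first by rewrite big_ord0; lra.
  pose w (d : nat) := v (inord d).
  rewrite big_ord_recr /= [X in _ + X]big_pred0; last first.
    by move=> q /=; apply/negbTE; rewrite neq_ltn ltn_ord.
  under eq_bigl => p do idtac. rewrite -[X in _ <= X]addr0 lerD2r.
  have -> : \sum_(p < n) \sum_(q < n.+1 | val q == (val (widen_ord (leqnSn n) p)).+1)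
     (if (lo <= v q) && (v (widen_ord (leqnSn n) p) <= hi) then v (widen_ord (leqnSn n) p) - v q else 0)
     = \sum_(d < n) (if (lo <= w d.+1) && (w d <= hi) then w d - w d.+1 else 0).
    apply: eq_bigr => p _.
    have ep : widen_ord (leqnSn n) p = inord p by apply: val_inj; rewrite /= inordK // ltnW // ltnS.
    rewrite (big_pred1 (inord p.+1)) ?ep //.
    have hp : (p < n)%N := ltn_ord p.
    by move=> q /=; rewrite -[in RHS]val_eqE /= !inordK // ?ltnS // ltnW.
  have := @nat_gap R w lo hi n hlh.
  have Mle : Mb w lo hi n <= hi - lo.
    by rewrite /Mb; case: (leP (w n) lo) => h; [lra|case: (leP (w n) hi) => h2; lra].
  move=> H; apply: le_trans (H _) Mle => d hd.
  by rewrite /w; apply: hv; rewrite /= !inordK // ltnS // ltnW.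
apply: le_trans (_ : (hi - lo) * (hi - lo) <= _); last by rewrite expr2.
apply: le_trans (_ : (hi - lo) * \sum_(p < n) \sum_(q < n | val q == (val p).+1)
     (if (lo <= v q) && (v p <= hi) then v p - v q else 0) <= _); last first.
  by apply: ler_wpM2l => //; lra.
rewrite mulr_sumr; apply: ler_sum => p _; rewrite mulr_sumr; apply: ler_sum => q /eqP hq.
case: ifP => [/andP [h1 h2]|_]; last by rewrite mulr0.
have : v q <= v p by apply: hv; rewrite hq.
nra.
Qed.

Definition sep n (s : 'S_n) (p i j : 'I_n) : bool :=
  ((s^-1)%g i <= p)%N != ((s^-1)%g j <= p)%N.

Definition wit (R : realType) n (A : 'M[R]_n) (s : 'S_n) (p i : 'I_n) : bool :=
  [exists j, (0 < A i j) && sep s p i j].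

Definition cross (R : realType) n (A : 'M[R]_n) (s : 'S_n) (p : 'I_n) : bool :=
  [exists i, wit A s p i].

Lemma nocross (R : realType) n (A : 'M[R]_n) s p i j :
  ~~ cross A s p -> 0 < A i j -> ((s^-1)%g i <= p)%N = ((s^-1)%g j <= p)%N.
Proof.
move=> /existsPn /(_ i) /existsPn /(_ j); rewrite /sep => h hA.
by move: h; rewrite hA /= negbK => /eqP.
Qed.

Lemma grid (R : realType) n (Q : nat) (x : nat -> 'I_n -> R) (A : nat -> 'M[R]_n) :
  (forall i, exists z : int, x 0%N i = z%:~R / Q%:R) ->
  (forall k i, x k.+1 i = qfloor Q (\sum_(j < n) A k i j * x k j)) ->
  forall t i, exists z : int, x t i = z%:~R / Q%:R.
Proof.
move=> h0 hs [|t] i; first exact: h0.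
by rewrite hs /qfloor; eexists.
Qed.

Lemma inv_lemma (R : realType) n (Q : nat) (A : nat -> 'M[R]_n) (x : nat -> 'I_n -> R)
  (s : 'S_n) (T0 : nat) (p : 'I_n) :
  (0 < Q)%N ->
  (forall t i, exists z : int, x t i = z%:~R / Q%:R) ->
  (forall k i, x k.+1 i = qfloor Q (\sum_(j < n) A k i j * x k j)) ->
  (forall k, doubly_stochastic (A k)) ->
  sorted_by (x T0) s ->
  forall m, (forall t', (T0 <= t' < T0 + m)%N -> ~~ cross (A t') s p) ->
  (forall u, ((s^-1)%g u <= p)%N -> x T0 (s p) <= x (T0 + m)%N u) /\
  (forall u (q : 'I_n), val q = (val p).+1 -> (p < (s^-1)%g u)%N -> x (T0 + m)%N u <= x T0 (s q)).
Proof.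
move=> hQ hg hx hA hs; elim=> [|m IH] hc.
  rewrite addn0; split.
    by move=> u hu; rewrite -(permKV s u); apply: hs.
  by move=> u q hq hu; rewrite -(permKV s u); apply: hs; rewrite hq.
have hc' : forall t', (T0 <= t' < T0 + m)%N -> ~~ cross (A t') s p.
  move=> t' /andP [a b]; apply: hc; rewrite a /= addnS ltnS ltnW //.
have [up lo] := IH hc'.
have nc : ~~ cross (A (T0 + m)%N) s p by apply: hc; rewrite leq_addr /= addnS ltnSn.
have [hA0 [hr _]] := hA (T0 + m)%N.
rewrite addnS; split.
  move=> u hu; rewrite hx.
  have [z ez] := hg T0 (s p).
  rewrite ez; apply: qfloor_ge => //; rewrite -ez.
  apply: (@le_trans _ _ (\sum_j A (T0 + m)%N u j * x T0 (s p))).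
    by rewrite -mulr_suml hr mul1r.
  apply: ler_sum => j _.
  have := hA0 u j; rewrite le_eqVlt => /orP [/eqP <-|hp]; first by rewrite !mul0r.
  apply: ler_wpM2l; first exact: ltW.
  by apply: up; rewrite -(nocross nc hp).
move=> u q hq hu; rewrite hx.
apply: le_trans (qfloor_le _ hQ) _.
apply: (@le_trans _ _ (\sum_j A (T0 + m)%N u j * x T0 (s q))); last first.
  by rewrite -mulr_suml hr mul1r.
apply: ler_sum => j _.
have := hA0 u j; rewrite le_eqVlt => /orP [/eqP <-|hp]; first by rewrite !mul0r.
apply: ler_wpM2l; first exact: ltW.
apply: (lo _ _ hq); move: hu; rewrite !ltnNge (nocross nc hp) //.
Qed.

Definition gg (R : realType) n (X : 'I_n -> R) (s : 'S_n) (p : 'I_n) : R :=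
  \sum_(q < n | val q == (val p).+1) (X (s p) - X (s q)) ^+ 2.

Lemma gg_ge0 (R : realType) n (X : 'I_n -> R) s p : 0 <= gg X s p.
Proof. by apply: sumr_ge0 => q _; apply: sqr_ge0. Qed.

Definition firstc (R : realType) n (A : nat -> 'M[R]_n) (s : 'S_n) T0 t p : bool :=
  cross (A t) s p && all (fun t' => ~~ cross (A t') s p) (index_iota T0 t).

Lemma time_bound (R : realType) n (Q : nat) (eta : R) (A : nat -> 'M[R]_n)
  (x : nat -> 'I_n -> R) (s : 'S_n) (T0 t : nat) :
  0 < eta -> (0 < Q)%N ->
  (forall t i, exists z : int, x t i = z%:~R / Q%:R) ->
  (forall k i, x k.+1 i = qfloor Q (\sum_(j < n) A k i j * x k j)) ->
  (forall k, doubly_stochastic (A k)) ->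
  (forall k i, 0 < A k i i) ->
  (forall k i j, 0 < A k i j -> eta <= A k i j) ->
  sorted_by (x T0) s -> (T0 <= t)%N ->
  eta / 2 * \sum_p (if firstc A s T0 t p then gg (x T0) s p else 0) <=
  \sum_i \sum_j A t i j * (x t j - \sum_l A t i l * x t l) ^+ 2.
Proof.
move=> he hQ hg hx hA hd hE hs hT.
have step1 : \sum_p (if firstc A s T0 t p then gg (x T0) s p else 0) <=
    \sum_i \sum_p (if firstc A s T0 t p && wit (A t) s p i then gg (x T0) s p else 0).
  rewrite exchange_big; apply: ler_sum => p _ /=.
  case F: (firstc A s T0 t p); last first.
    by apply: sumr_ge0 => *.
  have := F; rewrite /firstc /cross => /andP [/existsP [i wi] _].
  rewrite (bigD1 i) //= wi /= lerDl.
  by apply: sumr_ge0 => j _; case: ifP => _; rewrite ?gg_ge0.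
apply: le_trans (ler_wpM2l _ step1) _; first by apply: divr_ge0; [apply: ltW|].
rewrite mulr_sumr; apply: ler_sum => i _.
have [hA0 [hr _]] := hA t.
have [a Pa ha] := @exists_max R _ (fun j => 0 < A t i j) (x t) i (hd t i).
have [b Pb hb] := @exists_min R _ (fun j => 0 < A t i j) (x t) i (hd t i).
set v := fun p => x T0 (s p).
set hi := x t a; set lo := x t b.
have hv : forall p q : 'I_n, (p <= q)%N -> v q <= v p by move=> p q; apply: hs.
have hlh : lo <= hi by apply: hb.
have claim : \sum_p (if firstc A s T0 t p && wit (A t) s p i then gg (x T0) s p else 0) <=
   \sum_(p < n) \sum_(q < n | val q == (val p).+1)
     (if (lo <= v q) && (v p <= hi) then (v p - v q) ^+ 2 else 0).
  apply: ler_sum => p _.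
  case: ifP => [/andP [/andP [_ hall] hw]|_]; last first.
    by apply: sumr_ge0 => q _; case: ifP => _; rewrite ?sqr_ge0.
  rewrite /gg; apply: ler_sum => q /eqP hq.
  have hc : forall t', (T0 <= t' < T0 + (t - T0))%N -> ~~ cross (A t') s p.
    move=> t'; rewrite subnKC // => ht; move/allP: hall; apply.
    by rewrite mem_index_iota.
  have [up low] := inv_lemma hQ hg hx hA hs hc.
  rewrite subnKC // in up low.
  move/existsP: hw => [j /andP [hij]]; rewrite /sep.
  case: (leqP ((s^-1)%g i) p) => hi1 /=.
    rewrite eq_sym eqb_id -ltnNge => hj.
    have e1 : v p <= hi := le_trans (up _ hi1) (ha _ (hd t i)).
    have e2 : lo <= v q := le_trans (hb _ hij) (low _ _ hq hj).
    by rewrite e1 e2.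
  rewrite eq_sym eqbF_neg negbK => hj.
  have e1 : v p <= hi := le_trans (up _ hj) (ha _ hij).
  have e2 : lo <= v q := le_trans (hb _ (hd t i)) (low _ _ hq hi1).
  by rewrite e1 e2.
have := gap_sum hv hlh.
have := row_bound (x t) (\sum_l A t i l * x t l) he (hA0 i) Pa Pb (hE t i).
move=> h1 h2.
apply: le_trans h1; apply: ler_wpM2l; first by apply: divr_ge0; [apply: ltW|].
exact: le_trans claim h2.
Qed.

Lemma sum_ge_term (R : realType) m N (F : nat -> R) t0 :
  (m <= t0 < N)%N -> (forall t, 0 <= F t) -> F t0 <= \sum_(m <= t < N) F t.
Proof.
move=> ht hF; rewrite (bigD1_seq t0) ?mem_index_iota ?iota_uniq //= lerDl.
by apply: sumr_ge0 => *.
Qed.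

Unset Implicit Arguments.
Theorem lemma7 (R : realType) (n : nat) (eta : R) (B Q : nat)
  (A : nat -> 'M[R]_n) (x : nat -> 'I_n -> R) :
  0 < eta -> (1 <= B)%N -> (1 <= Q)%N ->
  (forall i, exists z : int, x 0%N i = z%:~R / Q%:R) ->
  (forall k i, x k.+1 i = qfloor Q (\sum_(j < n) A k i j * x k j)) ->
  (* (i) *)
  (forall k, doubly_stochastic (A k)) ->
  (forall k i, 0 < A k i i) ->
  (forall k i j, 0 < A k i j -> eta <= A k i j) ->
  (* (ii) *)
  (forall (k : nat) (s : 'S_n), sorted_by (x (k * B)%N) s ->
     forall d d' : 'I_n, val d' = (val d).+1 ->
       x (k * B)%N (s d) = x (k * B)%N (s d') \/
       exists t : nat, (k * B <= t)%N /\ (t < k.+1 * B)%N /\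
         exists p q : 'I_n, (p <= d)%N /\ (d < q)%N /\
           (in_edges (A t) (s p, s q) \/ in_edges (A t) (s q, s p))) ->
  forall (k : nat) (s : 'S_n), sorted_by (x (k * B)%N) s ->
    Vlow (x (k * B)%N) - Vlow (x (k.+1 * B)%N) >=
      eta / 2 * \sum_(p < n) \sum_(q < n | val q == (val p).+1)
         (x (k * B)%N (s p) - x (k * B)%N (s q)) ^+ 2.
Proof.
move=> he hB hQ h0 hx hA hd hE hii k s hs.
have hg := grid h0 hx.
have eT : (k.+1 * B)%N = (k * B + B)%N by rewrite mulSn addnC.
rewrite eT.
set T0 := (k * B)%N.
have tel : \sum_(T0 <= t < T0 + B) (Vlow (x t) - Vlow (x t.+1)) = Vlow (x T0) - Vlow (x (T0 + B)%N).
  rewrite (@telescope_sumr_eq _ T0 (T0 + B) (fun t => - Vlow (x t))) ?leq_addr //.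
    by rewrite opprK addrC.
  by move=> t _; rewrite opprK addrC.
rewrite -tel.
have stepB : \sum_(T0 <= t < T0 + B) \sum_i \sum_j A t i j * (x t j - \sum_l A t i l * x t l) ^+ 2
    <= \sum_(T0 <= t < T0 + B) (Vlow (x t) - Vlow (x t.+1)).
  apply: ler_sum_nat => t _; apply: step_dec; [exact: hQ|exact: hA|exact: hg t|].
  exact: hx.
apply: le_trans stepB.
have stepC : \sum_(T0 <= t < T0 + B) (eta / 2 * \sum_p (if firstc A s T0 t p then gg (x T0) s p else 0))
   <= \sum_(T0 <= t < T0 + B) \sum_i \sum_j A t i j * (x t j - \sum_l A t i l * x t l) ^+ 2.
  apply: ler_sum_nat => t /andP [ht _]; apply: (@time_bound R n Q) => //.
apply: le_trans stepC.
rewrite -mulr_sumr; apply: ler_wpM2l; first by apply: divr_ge0; [apply: ltW|].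
rewrite exchange_big /=; apply: ler_sum => p _.
have cases : gg (x T0) s p = 0 \/ exists t, (T0 <= t < T0 + B)%N /\ cross (A t) s p.
  case: (ltnP (val p).+1 n) => hpn; last first.
    left; apply: big1 => q /eqP hq.
    by move: (ltn_ord q); rewrite hq ltnNge hpn.
  have := hii k s hs p (Ordinal hpn) erefl.
  case=> [heq|[t [h1 [h2 [p' [q' [hp' [hq' hed]]]]]]]].
    left; apply: big1 => q /eqP hq.
    have -> : q = Ordinal hpn by apply: val_inj.
    by rewrite -/T0 heq subrr expr0n.
  right; exists t; split; first by rewrite -/T0 h1 /= -eT.
  apply/existsP; rewrite /in_edges /= in hed; case: hed => hed.
    exists (s q'); apply/existsP; exists (s p'); rewrite hed /sep /= !permK.
    by rewrite hp' [(q' <= p)%N]leqNgt hq'.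
  exists (s p'); apply/existsP; exists (s q'); rewrite hed /sep /= !permK.
  by rewrite hp' [(q' <= p)%N]leqNgt hq'.
change (gg (x T0) s p <= \sum_(T0 <= t < T0 + B) (if firstc A s T0 t p then gg (x T0) s p else 0)).
case: cases => [->|[t [ht hc]]].
  by apply: sumr_ge0 => t _; case: ifP.
have exP : exists t, (T0 <= t)%N && cross (A t) s p by exists t; rewrite hc (andP ht).1.
case: (ex_minnP exP) => t0 /andP [h1 h2] hmin.
have ht0 : (t0 <= t)%N by apply: hmin; rewrite hc (andP ht).1.
have f0 : firstc A s T0 t0 p.
  rewrite /firstc h2 /=; apply/allP => t'; rewrite mem_index_iota => /andP [a b].
  apply/negP => c; have := hmin t'; rewrite a c => /(_ isT); rewrite leqNgt b.
  done.
have := @sum_ge_term R T0 (T0 + B) (fun t => if firstc A s T0 t p then gg (x T0) s p else 0) t0.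
rewrite f0; apply.
  by rewrite h1 /=; apply: leq_ltn_trans ht0 (andP ht).2.
by move=> t'; case: ifP => _ //; apply: gg_ge0.
Qed.
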